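(* Let $n$ be a positive integer and $r$ a positive divisor of $n$. For every $\chi:\mathbb Z_r\to\{1,-1\}$, \[\operatorname{disc}(\mathcal A_n)\le \max_{A\in\mathcal A_r}|\chi(A)|+\frac{n}{r}\cdot\max_{A_0\in\mathcal A_r^0}|\chi(A_0)|.\]
   Context: For a positive integer $N$, an arithmetic progression in $\mathbb{Z}_N$ is a set $\{a+kd: 0\le k<l\}$ with $a,d\in\mathbb{Z}_N$ and $l$ an integer with $0\le l\le N/\gcd(N,d)$ (with $\gcd(0,N)=N$); $\mathcal A_N$ is the family of all of them. For $s,i\in\mathbb{Z}_N$, $C(s,i)=\{x\in\mathbb{Z}_N: x=i+ks \text{ for some } k\in\mathbb{Z}_N\}$ (the congruence class of $i$ modulo $s$), and $\mathcal A_N^0=\{C(s,i): s,i\in\mathbb{Z}_N\}$. For $\chi$ and a set $B$, $\chi(B)=\sum_{x\in B}\chi(x)$, and $\operatorname{disc}(\mathcal A_N)=\min_{\chi:\mathbb{Z}_N\to\{1,-1\}}\max_{A\in\mathcal A_N}|\chi(A)|$. *)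

(* Defs.v *)
(* Z_N is represented by 'I_N (residues 0..N-1) with
   arithmetic modulo N done on the underlying naturals. *)
From mathcomp Require Import all_boot all_order all_algebra.
Set Implicit Arguments. Unset Strict Implicit. Unset Printing Implicit Defensive.
Import Order.TTheory GRing.Theory Num.Theory.

Definition APset (N : nat) (a d l : nat) : {set 'I_N} :=
  [set x : 'I_N | [exists k : 'I_l, nat_of_ord x == (a + k * d) %% N]].

(* A \in A_N : a, d in Z_N and 0 <= l <= N / gcd(N,d)  (gcdn N 0 = N). *)
Definition isAP (N : nat) (A : {set 'I_N}) : bool :=
  [exists a : 'I_N, exists d : 'I_N, exists l : 'I_N.+1,
     (l <= N %/ gcdn N d)%N && (A == APset N a d l)].

Definition Cset (N : nat) (s i : nat) : {set 'I_N} :=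
  [set x : 'I_N | [exists k : 'I_N, nat_of_ord x == (i + k * s) %% N]].

Definition isC (N : nat) (A : {set 'I_N}) : bool :=
  [exists s : 'I_N, exists i : 'I_N, A == Cset N s i].

Definition chisum (N : nat) (chi : 'I_N -> int) (B : {set 'I_N}) : int :=
  (\sum_(x in B) chi x)%R.

Definition maxAP (N : nat) (chi : 'I_N -> int) : nat :=
  \max_(A : {set 'I_N} | isAP A) `|chisum chi A|%N.

Definition maxC (N : nat) (chi : 'I_N -> int) : nat :=
  \max_(A : {set 'I_N} | isC A) `|chisum chi A|%N.

Definition sgnf (N : nat) (f : {ffun 'I_N -> bool}) : 'I_N -> int :=
  fun x => if f x then 1%R else (-1)%R.

(* disc(A_N) = min over colourings chi of max_{A in A_N} |chi(A)|.
   The default N of the min is harmless: every maxAP value is <= N. *)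
Definition disc (N : nat) : nat :=
  \big[minn/N]_(f : {ffun 'I_N -> bool}) maxAP (sgnf f).

(* Main.v *)
Require Import Defs.
From mathcomp Require Import all_boot all_order all_algebra zify.
Set Implicit Arguments. Unset Strict Implicit. Unset Printing Implicit Defensive.
Lemma inj_mod0 N a d k k' : k <= k' -> 0 < N -> k' < N %/ gcdn N d ->
  (a + k*d) %% N = (a + k'*d) %% N -> k = k'.
Proof.
move=> hkk hN hk' /eqP; rewrite eqn_modDl eq_sym eqn_mod_dvd; last by rewrite leq_mul.
rewrite -mulnBl.
set g := gcdn N d.
have gpos : 0 < g by rewrite gcdn_gt0 hN.
have eN : N = g * (N %/ g) by rewrite mulnC divnK // dvdn_gcdl.
have ed : d = g * (d %/ g) by rewrite mulnC divnK // dvdn_gcdr.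
have cop : coprime (N %/ g) (d %/ g).
  rewrite /coprime; apply/eqP; apply/eqP.
  by rewrite -(eqn_pmul2l gpos) muln_gcdr -eN -ed muln1.
rewrite {1}eN {1}ed mulnCA dvdn_pmul2l // Gauss_dvdl //.
case: (posnP (k' - k)) => [|h]; first lia.
move/(dvdn_leq h) => h2. rewrite -/g in hk'. clear eN ed cop. lia.
Qed.
Lemma inj_mod N a d k k' : 0 < N -> k < N %/ gcdn N d -> k' < N %/ gcdn N d ->
  (a + k*d) %% N = (a + k'*d) %% N -> k = k'.
Proof.
move=> hN hk hk' he; case: (leqP k k') => c; first exact: (inj_mod0 c hN hk' he).
by apply/esym/(inj_mod0 (ltnW c) hN hk (esym he)).
Qed.
Import GRing.Theory.
Lemma sum_AP N (hN : 0 < N) a d l (g : 'I_N -> int) : l <= N %/ gcdn N d ->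
  chisum g (APset N a d l) = (\sum_(k < l) g (Ordinal (ltn_pmod (a + k*d) hN)))%R.
Proof.
move=> hl.
set F := fun k : 'I_l => Ordinal (ltn_pmod (a + k*d) hN).
have -> : APset N a d l = F @: [set: 'I_l].
  apply/setP => x; rewrite inE; apply/existsP/imsetP.
    by move=> [k /eqP hx]; exists k; [rewrite in_setT | apply/val_inj].
  by move=> [k _ ->]; exists k.
rewrite /chisum big_imset /=.
  by apply: eq_bigl => k; rewrite in_setT.
move=> k1 k2 _ _ /(congr1 val) /= h; apply/val_inj.
by apply: (inj_mod hN _ _ h); apply: leq_trans hl.
Qed.
Definition cr r (hr : 0 < r) (chi : 'I_r -> int) (m : nat) : int :=
  chi (Ordinal (ltn_pmod m hr)).

Lemma cr_mod r (hr : 0 < r) chi m : cr hr chi (m %% r) = cr hr chi m.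
Proof. by rewrite /cr; congr chi; apply/val_inj; rewrite /= modn_mod. Qed.

Lemma sum_APr r (hr : 0 < r) chi b e t : t <= r %/ gcdn r e ->
  chisum chi (APset r (b %% r) (e %% r) t) = (\sum_(k < t) cr hr chi (b + k*e))%R.
Proof.
move=> ht; rewrite (sum_AP hr); last by rewrite gcdn_modr.
apply: eq_bigr => k _; rewrite -[RHS]cr_mod -[LHS]cr_mod; congr cr.
by rewrite -modnDmr modnMmr modnDmr modnDml.
Qed.

Lemma APr r (hr : 0 < r) chi b e t : t <= r %/ gcdn r e ->
  (absz (\sum_(k < t) cr hr chi (b + k*e))%R <= maxAP chi)%N.
Proof.
move=> ht.
have ht' : t < r.+1 by rewrite ltnS (leq_trans ht) // leq_div.
have hA : isAP (APset r (b %% r) (e %% r) t).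
  apply/existsP; exists (Ordinal (ltn_pmod b hr)); apply/existsP.
  exists (Ordinal (ltn_pmod e hr)); apply/existsP; exists (Ordinal ht').
  by rewrite /= gcdn_modr ht eqxx.
rewrite -(sum_APr hr) //.
exact: (@leq_bigmax_cond _ _ (fun A => `|chisum chi A|%N) _ hA).
Qed.
Lemma Cr r (hr : 0 < r) chi b e :
  (absz (\sum_(k < r %/ gcdn r e) cr hr chi (b + k*e))%R <= maxC chi)%N.
Proof.
set p := r %/ gcdn r e.
have gpos : 0 < gcdn r e by rewrite gcdn_gt0 hr.
have ppos : 0 < p by rewrite divn_gt0 // dvdn_leq // dvdn_gcdl.
have hpr : p <= r by rewrite leq_div.
set e' := e %% r; set b' := b %% r.
have hpe : p * e' = r * (e' %/ gcdn r e').
  by rewrite muln_divCA_gcd /p -gcdn_modr mulnC.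
have hset : APset r b' e' p = Cset r e' b'.
  apply/setP => x; rewrite !inE; apply/existsP/existsP.
    by move=> [k hk]; exists (widen_ord hpr k).
  move=> [k /eqP hk]; exists (Ordinal (ltn_pmod k ppos)); apply/eqP; rewrite hk /=.
  have -> : b' + k * e' = (k %/ p * (e' %/ gcdn r e')) * r + (b' + k %% p * e').
    rewrite {1}(divn_eq k p) mulnDl -mulnA hpe; lia.
  by rewrite modnMDl.
have hA : isC (APset r b' e' p).
  by rewrite hset; apply/existsP; exists (Ordinal (ltn_pmod e hr)); apply/existsP;
    exists (Ordinal (ltn_pmod b hr)).
rewrite -(sum_APr hr) //.
exact: (@leq_bigmax_cond _ _ (fun A => `|chisum chi A|%N) _ hA).
Qed.
Lemma main_ind r (hr : 0 < r) chi d l : forall b,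
  (absz (\sum_(k < l) cr hr chi (b + k*d))%R
     <= maxAP chi + l %/ (r %/ gcdn r d) * maxC chi)%N.
Proof.
set p := r %/ gcdn r d.
have gpos : 0 < gcdn r d by rewrite gcdn_gt0 hr.
have ppos : 0 < p by rewrite divn_gt0 // dvdn_leq // dvdn_gcdl.
elim/ltn_ind: l => l IH b.
case: (ltnP l p) => hl.
  by rewrite divn_small // mul0n addn0; apply: APr; exact: ltnW.
rewrite -(subnKC hl) big_split_ord /=.
have -> : (\sum_(i < l - p) cr hr chi (b + (p + i) * d))%R
        = (\sum_(i < l - p) cr hr chi ((b + p * d) + i * d))%R.
  by apply: eq_bigr => i _; rewrite mulnDl addnA.
rewrite divnDl // divnn ppos mulnDl mul1n.
have h1 := Cr hr chi b d.
have h2 := IH (l - p) ltac:(lia) (b + p * d).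
set S1 := (\sum_(i < p) _)%R in h1 *.
set S2 := (\sum_(i < l - p) _)%R in h2 *.
have : (absz (S1 + S2)%R <= absz S1 + absz S2)%N by lia.
lia.
Qed.
Theorem lemma3p2 (n r : nat) (hn : (0 < n)%N) (hr : (0 < r)%N) (hrn : (r %| n)%N)
  (chi : 'I_r -> int) (hchi : forall x, chi x = 1%R \/ chi x = (-1)%R) :
  (disc n <= maxAP chi + n %/ r * maxC chi)%N.
Proof.
set f := [ffun x : 'I_n => chi (Ordinal (ltn_pmod x hr)) == 1%R].
have hf : forall x : 'I_n, sgnf f x = cr hr chi x.
  move=> x; rewrite /sgnf /cr ffunE.
  by case: (hchi (Ordinal (ltn_pmod x hr))) => ->.
apply: (@leq_trans (maxAP (sgnf f))).
  exact: (@Order.TotalTheory.bigmin_le _ nat _ n f (fun g => maxAP (sgnf g))).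
apply/bigmax_leqP => A /existsP[a /existsP[d /existsP[l /andP[hl /eqP->]]]].
rewrite (sum_AP hn) //.
rewrite (eq_bigr (fun k : 'I_l => cr hr chi (a + k * d))); last first.
  move=> k _; rewrite hf /= -[RHS]cr_mod -[LHS]cr_mod; congr cr.
  by rewrite /= modn_dvdm.
apply: leq_trans (main_ind hr chi d l a) _.
rewrite leq_add2l leq_mul2r; apply/orP; right.
set p := r %/ gcdn r d.
have gpos : 0 < gcdn r d by rewrite gcdn_gt0 hr.
have ppos : 0 < p by rewrite divn_gt0 // dvdn_leq // dvdn_gcdl.
have hgg : gcdn r d <= gcdn n d.
  apply: dvdn_leq; first by rewrite gcdn_gt0 hn.
  by rewrite dvdn_gcd dvdn_gcdr andbT (dvdn_trans (dvdn_gcdl _ _) hrn).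
have hnp : n %/ gcdn r d = n %/ r * p.
  by rewrite /p muln_divA ?dvdn_gcdl // divnK.
have : l <= n %/ r * p.
  by rewrite -hnp (leq_trans hl) // leq_div2l.
move/(leq_div2r p); rewrite mulnK //.
Qed.
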